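(* Let $G$ be a finite simple connected graph with exactly $h$ holes. Suppose that all the holes in $G$ are pairwise edge-disjoint and that $G$ has exactly one non-edge maximal clique $K$. If $|V(K)|=h+1$, then there exists a vertex $v\in V(K)$ satisfying one of the following: (a) there is no $K$-avoiding path from $v$ to any vertex of any hole of $G$; (b) $v$ is incident to an edge that belongs to both $K$ and some hole $H$ of $G$, and $v$ is not contained in any hole of $G$ other than $H$.
   Context: A hole of a graph is an induced (chordless) cycle of length at least $4$. A clique is a complete subgraph; a clique is non-edge if it has at least $3$ vertices. For a clique $K$ in $G$, a path $P$ in $G$ is called a $K$-avoiding path if $P$ is not an edge of $K$ and none of the internal vertices of $P$ lies on $K$. *)

(* Defs.v *)
From mathcomp Require Import all_boot.
Set Implicit Arguments. Unset Strict Implicit. Unset Printing Implicit Defensive.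

Section Graphs.
Variables (T : finType) (e : rel T).

Definition simple_graph := symmetric e /\ irreflexive e.

Definition connected_graph := forall x y : T, connect e x y.

(* A hole: an induced (chordless) cycle of length >= 4, identified with its
   vertex set S (a hole is an induced subgraph, so it is determined by S). *)
Definition is_hole (S : {set T}) : Prop :=
  exists c : seq T,
    [/\ uniq c, 4 <= size c, cycle e c,
        {in c &, forall x y, e x y -> (y == next c x) || (y == prev c x)}
      & S = [set x in c]].

(* Edges of a hole H: since H is an induced subgraph, these are exactly the
   edges of G with both ends in H. *)
Definition hole_edge (H : {set T}) (x y : T) : bool :=
  [&& e x y, x \in H & y \in H].

Definition is_clique (K : {set T}) : Prop :=
  {in K &, forall x y, x != y -> e x y}.

Definition maximal_clique (K : {set T}) : Prop :=
  is_clique K /\ forall K' : {set T}, is_clique K' -> K \subset K' -> K' = K.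

Definition non_edge_clique (K : {set T}) : Prop := 3 <= #|K|.

Definition K_avoiding_path (K : {set T}) (v w : T) (p : seq T) : Prop :=
  [/\ path e v p, last v p = w, uniq (v :: p),
      ~~ [&& size p == 1, v \in K & w \in K]
    & all (fun x => x \notin K) (behead (belast v p))].

End Graphs.

(* Main.v *)
Require Import Defs.
From mathcomp Require Import all_boot.
From Stdlib Require Import Classical ClassicalEpsilon Lia.
Set Implicit Arguments. Unset Strict Implicit. Unset Printing Implicit Defensive.

Lemma next_at_mid (T : eqType) (x y y0 : T) p : forall z q,
  x \notin z :: p -> next_at x y0 z (p ++ x :: y :: q) = y.
Proof.
elim: p => [|a p IH] z q.
  by rewrite !inE /= => xz; rewrite (negPf xz) eqxx.
rewrite inE negb_or => /andP[xz xp] /=.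
by rewrite (negPf xz) IH.
Qed.

Lemma next_mid (T : eqType) (p q : seq T) x y :
  uniq (p ++ x :: y :: q) -> next (p ++ x :: y :: q) x = y.
Proof.
case: p => [|z p] /=; first by rewrite eqxx.
move=> /andP[zn U]; apply: next_at_mid.
rewrite inE negb_or; apply/andP; split.
  by apply: contra zn => /eqP <-; rewrite mem_cat inE eqxx orbT.
by move: U; rewrite cat_uniq => /and3P[_ /hasPn H _]; apply: H; rewrite inE eqxx.
Qed.

Lemma next_at_last (T : eqType) (y y0 : T) m : forall z,
  y \notin z :: m -> next_at y y0 z (rcons m y) = y0.
Proof.
elim: m => [|a m IH] z.
  by rewrite !inE /= => yz; rewrite (negPf yz) eqxx.
rewrite inE negb_or => /andP[yz ym] /=.
by rewrite (negPf yz) IH.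
Qed.

Lemma next_last (T : eqType) (m : seq T) x y :
  uniq (x :: rcons m y) -> next (x :: rcons m y) y = x.
Proof.
move=> /= /andP[xn U]; apply: next_at_last.
rewrite inE negb_or; apply/andP; split.
  by apply: contra xn => /eqP ->; rewrite mem_rcons inE eqxx.
by move: U; rewrite rcons_uniq => /andP[].
Qed.

Lemma prev_of_next (T : eqType) (c : seq T) x y : uniq c -> next c x = y -> prev c y = x.
Proof. by move=> U <-; rewrite prev_next. Qed.

Lemma induced_chordless (T : eqType) (e : rel T) (c : seq T) :
  symmetric e -> irreflexive e -> uniq c ->
  (forall c1 x m y c2, c = c1 ++ x :: m ++ y :: c2 -> e x y ->
      m = [::] \/ (c1 = [::] /\ c2 = [::])) ->
  {in c &, forall x y, e x y -> (y == next c x) || (y == prev c x)}.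
Proof.
move=> sym irr U H x y xc yc exy.
have xy : x != y by apply: contraTneq exy => ->; rewrite irr.
move: U H yc; case/splitPr: xc => c1 c2 U H.
rewrite mem_cat inE eq_sym (negPf xy) /=.
case/orP => [yc1|yc2].
- move: U H; case/splitPr: yc1 => c0 m; rewrite -catA /= => U H.
  have := H c0 y m x c2 erefl; rewrite sym => /(_ exy) [Hm|[H1 H2]]; subst.
  + by rewrite (prev_of_next (x:=y) U) ?eqxx ?orbT // (next_mid U).
  + by move: U; rewrite cat0s cats1 => U; rewrite (next_last U) eqxx.
- move: U H; case/splitPr: yc2 => m c3 U H.
  have := H c1 x m y c3 erefl exy => [[Hm|[H1 H2]]]; subst.
  + by rewrite (next_mid U) eqxx.
  + move: U; rewrite cat0s cats1 => U.
    by rewrite (prev_of_next U (next_last U)) eqxx orbT.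
Qed.

Ltac nlia := intros; repeat match goal with H : is_true (_ <= _) |- _ => move/leP: H => H end;
  try apply/leP;
  repeat match goal with H : context [addn _ _] |- _ => rewrite -plusE in H
  | H : context [subn _ _] |- _ => rewrite -minusE in H
  | H : context [muln _ _] |- _ => rewrite -multE in H end;
  rewrite -?plusE -?minusE -?multE; lia.

Definition eO (T : finType) (e : rel T) (K : {set T}) : rel T :=
  [rel x y | [&& e x y, x \notin K & y \notin K]].

Definition bridge (T : finType) (e : rel T) (K : {set T}) v u (s : seq T) :=
  [&& s != [::], all (fun x => x \notin K) s, path e v s & e (last v s) u].

Lemma path_suf (T : Type) (e : rel T) x p y q : path e x (p ++ y :: q) -> path e y q.
Proof. by rewrite cat_path => /andP[_ /= /andP[]]. Qed.
Lemma path_pre (T : Type) (e : rel T) x p q : path e x (p ++ q) -> path e x p.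
Proof. by rewrite cat_path => /andP[]. Qed.
Lemma path_mid (T : Type) (e : rel T) x p y q : path e x (p ++ y :: q) -> e (last x p) y.
Proof. by rewrite cat_path => /andP[_ /= /andP[]]. Qed.
Lemma last_cc (T : Type) (x : T) p y q : last x (p ++ y :: q) = last y q.
Proof. by rewrite last_cat. Qed.
Lemma all_suf (T : Type) (a : pred T) p q : all a (p ++ q) -> all a q.
Proof. by rewrite all_cat => /andP[]. Qed.
Lemma all_pre (T : Type) (a : pred T) p q : all a (p ++ q) -> all a p.
Proof. by rewrite all_cat => /andP[]. Qed.

Lemma bridge_hole (T : finType) (e : rel T) (K : {set T}) :
  symmetric e -> irreflexive e -> is_clique e K ->
  (forall x v u, x \notin K -> v \in K -> u \in K -> v != u -> e v x -> e x u -> False) ->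
  forall v u s, v \in K -> u \in K -> v != u -> bridge e K v u s ->
  exists S, [/\ is_hole e S, v \in S & u \in S].
Proof.
move=> sym irr Kcl F1 v u s vK uK vu.
move: {2}(size s) (leqnn (size s)) => n; elim: n s => [|n IH] s.
  by case: s.
move=> hs bs.
case: (classic (exists S, [/\ is_hole e S, v \in S & u \in S])) => // nG.
have noshort : forall s2, size s2 < size s -> ~~ bridge e K v u s2.
  move=> s2 h2; apply/negP => b2; apply: nG; apply: (IH s2) => //; nlia.
case/and4P: bs => sn sall spath slast.
have lastnv : last v s \notin K.
  case: s sn sall {spath slast noshort hs} => // a s0 _ /allP H; apply: H.
  by rewrite /= mem_last.
move: slast lastnv; case: (shortenP spath) => s' ps' us' sub slast lastnv.
have s'sz : size s' <= size s.
  by apply: uniq_leq_size => //; case/andP: us'.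
have s'all : all (fun x => x \notin K) s'.
  by apply/allP => y /sub; move/allP: sall; apply.
have s'n : s' != [::].
  by move: lastnv; case: (s') => //=; rewrite vK.
have noshort' : forall s2, size s2 < size s' -> ~~ bridge e K v u s2.
  by move=> s2 h; apply: noshort; nlia.
have vnu : u != v by rewrite eq_sym.
have euv : e u v by apply: Kcl.
have uns' : u \notin s' by apply/negP => /(allP s'all); rewrite uK.
have vns' : v \notin s' by case/andP: us'.
have us's : uniq s' by case/andP: us'.
pose c := v :: rcons s' u.
have Uc : uniq c by rewrite /c /= mem_rcons inE negb_or vu vns' rcons_uniq uns' us's.
exists [set x in c]; split; last first.
- by rewrite inE /c inE mem_rcons inE eqxx orbT.
- by rewrite inE /c /= !inE eqxx.
exists c; split => //.
- rewrite /c /= size_rcons.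
  case E: s' s'n => [|a [|b s0]] // _.
  move: ps' slast s'all; rewrite E /= => /andP[eva _] eau /andP[aK _]; exfalso.
  exact: (F1 a v u).
- by rewrite /c /cycle rcons_path last_rcons euv rcons_path ps' slast.
- apply: induced_chordless => //.
  move=> c1 x m y c2 Hc exy.
  case: m Hc => [|a m'] Hc; [by left | right].
  move: Hc; rewrite /c; case: c1 => [|z c1'] /= [Ex Hc]; subst.
  + split => //; case/lastP: c2 Hc => [|c2' w] // Hc; exfalso.
    have /rcons_inj[Es' Eu] : rcons s' u = rcons ((a :: m') ++ y :: c2') w.
      by rewrite Hc rcons_cat.
    move: ps' slast s'all; rewrite Es' => ps' slast s'all.
    have hsz : size (y :: c2') < size s' by rewrite Es' /= ?size_cat /=; nlia.
    move/negP: (noshort' _ hsz); apply.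
    move: ps' slast s'all; rewrite -cat_cons => P L A.
    by rewrite /bridge (all_suf A) /= exy (path_suf P) -(last_cc x (a :: m')) L.
  + exfalso.
    case/lastP: c2 Hc => [|c2' w] Hc.
    * have /rcons_inj[Es' Eu] : rcons s' u = rcons (c1' ++ x :: a :: m') y.
        by rewrite Hc -cats1 -catA.
      move: ps' slast s'all; rewrite Es' => ps' slast s'all.
      have hsz : size (rcons c1' x) < size s' by rewrite Es' size_rcons /= ?size_cat /=; nlia.
    move/negP: (noshort' _ hsz); apply.
      move: ps' s'all; rewrite cat_path all_cat /= /bridge last_rcons rcons_path all_rcons.
      case/andP=> -> /andP[-> _] /andP[-> /andP[-> _]]; case: Eu => ->.
      by rewrite exy; case: (c1') .
    * have /rcons_inj[Es' Eu] : rcons s' u = rcons (c1' ++ x :: a :: m' ++ y :: c2') w.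
        by rewrite Hc rcons_cat /= rcons_cat /=.
      move: ps' slast s'all; rewrite Es' => ps' slast s'all.
      have hsz : size (c1' ++ x :: y :: c2') < size s' by rewrite Es' /= !size_cat /= ?size_cat /=; nlia.
    move/negP: (noshort' _ hsz); apply.
      have E : c1' ++ x :: a :: m' ++ y :: c2' = (c1' ++ x :: a :: m') ++ y :: c2' by rewrite -catA.
      move: ps' slast s'all; rewrite E => P L A.
      rewrite /bridge cat_path (path_pre (path_pre P)) /= exy (path_suf P).
      have := path_mid (path_pre P); rewrite /= => ->.
      rewrite last_cc; move: L; rewrite last_cc => ->.
      move: A; rewrite !all_cat /= => /andP[/andP[-> /andP[-> _]] /andP[-> ->]].
      by case: (c1').
Qed.

Lemma tri_cycle (T : eqType) (e : rel T) (c : seq T) x y z :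
  symmetric e -> uniq c -> 4 <= size c ->
  {in c &, forall x y, e x y -> (y == next c x) || (y == prev c x)} ->
  x \in c -> y \in c -> z \in c -> x != y -> y != z -> z != x ->
  e x y -> e y z -> e z x -> False.
Proof.
move=> sym U sz chord xc yc zc xy yz zx exy eyz ezx.
case: (rot_to xc) => i r Hr.
have U' : uniq (x :: r) by rewrite -Hr rot_uniq.
have sz' : 4 <= size (x :: r) by rewrite -Hr size_rot.
have chord' : {in x :: r &, forall u w, e u w ->
   (w == next (x :: r) u) || (w == prev (x :: r) u)}.
  move=> a b; rewrite -Hr !mem_rot => ac bc eab.
  by rewrite next_rot // prev_rot //; apply: chord.
have yc' : y \in x :: r by rewrite -Hr mem_rot.
have zc' : z \in x :: r by rewrite -Hr mem_rot.
case: r Hr U' sz' chord' yc' zc' => [|a [|b r0]] // Hr U' sz' chord' yc' zc'.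
case/lastP: r0 Hr U' sz' chord' yc' zc' => [|m l] // Hr U' sz' chord' yc' zc'.
have N1 : next (x :: a :: b :: rcons m l) x = a := next_mid (p := [::]) U'.
have N2 : next (x :: a :: b :: rcons m l) a = b := next_mid (p := [:: x]) U'.
have N3 : next (x :: a :: b :: rcons m l) l = x := next_last (m := a :: b :: m) U'.
have P1 : prev (x :: a :: b :: rcons m l) x = l := prev_of_next U' N3.
have P2 : prev (x :: a :: b :: rcons m l) a = x := prev_of_next U' N1.
have Hy : (y == a) || (y == l) by move: (chord' x y (mem_head _ _) yc' exy); rewrite N1 P1.
have Hz : (z == a) || (z == l) by move: (chord' x z (mem_head _ _) zc' (etrans (sym _ _) ezx)); rewrite N1 P1.
have eal : e a l.
  case/orP: Hy => /eqP Ey; case/orP: Hz => /eqP Ez; subst.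
  - by rewrite eqxx in yz.
  - exact: eyz.
  - by rewrite sym.
  - by rewrite eqxx in yz.
have la : l \in x :: a :: b :: rcons m l by rewrite !inE mem_rcons inE eqxx !orbT.
have ac : a \in x :: a :: b :: rcons m l by rewrite !inE eqxx orbT.
move: (chord' a l ac la eal); rewrite N2 P2.
move: U'; rewrite /= !inE mem_rcons !inE rcons_uniq !negb_or.
case/and5P => /and4P[_ _ xl _] _ bl _ _.
move: bl; rewrite mem_rcons inE negb_or => /andP[bl _].
by rewrite eq_sym (negPf bl) eq_sym (negPf xl).
Qed.

Lemma hole_K2 (T : finType) (e : rel T) (K S : {set T}) :
  symmetric e -> is_clique e K -> is_hole e S -> #|S :&: K| <= 2.
Proof.
move=> sym Kcl [c [U sz cyc chord ->]].
rewrite leqNgt; apply/negP => /card_gt2P [x [y [z [[xS yS zS] [xy yz zx]]]]].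
move: xS yS zS; rewrite !inE => /andP[xc xK] /andP[yc yK] /andP[zc zK].
apply: (tri_cycle sym U sz chord xc yc zc xy yz zx); apply: Kcl => //.
Qed.

Lemma max_clique_ext (T : finType) (e : rel T) (S : {set T}) :
  is_clique e S -> exists M, maximal_clique e M /\ S \subset M.
Proof.
move: {2}(#|T| - #|S|) (leqnn (#|T| - #|S|)) => n.
elim: n S => [|n IH] S hn cl;
  (case: (classic (maximal_clique e S)) => [mS|nmS]; first by exists S);
  (have [K' [clK' [sK' nK']]] : exists K', [/\ is_clique e K', S \subset K' & K' <> S]
    by apply: NNPP => H; apply: nmS; split => // K' c1 s1; apply: NNPP => n1; apply: H; exists K');
  have ltK : #|S| < #|K'| by apply: proper_card; rewrite properEneq sK' andbT; apply/eqP => E; apply: nK'.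
- by exfalso; have := max_card K'; nlia.
- have [M [mM sM]] := IH K' ltac:(have := max_card K'; nlia) clK'.
  by exists M; split => //; apply: subset_trans sM.
Qed.

Lemma tri_K (T : finType) (e : rel T) (K : {set T}) :
  symmetric e -> irreflexive e -> maximal_clique e K ->
  (forall K' : {set T}, maximal_clique e K' -> non_edge_clique K' -> K' = K) ->
  forall x v u, x \notin K -> v \in K -> u \in K -> v != u -> e v x -> e x u -> False.
Proof.
move=> sym irr [Kcl _] Kun x v u xK vK uK vu evx exu.
have xv : x != v by apply: contraNneq xK => ->.
have xu : x != u by apply: contraNneq xK => ->.
have evu : e v u by apply: Kcl.
have clS : is_clique e [set v; u; x].
  move=> a b; rewrite !inE => /orP[/orP[]|] /eqP -> /orP[/orP[]|] /eqP -> //; rewrite ?eqxx // => _;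
  by rewrite // sym.
have [M [mM sM]] := max_clique_ext clS.
have c3 : 2 < #|[set v; u; x]|.
  apply/card_gt2P; exists v, u, x; split; first by rewrite !inE !eqxx ?orbT.
  by split => //; rewrite eq_sym.
have EM : M = K by apply: Kun => //; rewrite /non_edge_clique; apply: leq_trans c3 (subset_leq_card sM).
move/subsetP: sM => /(_ x); rewrite EM !inE eqxx orbT => /(_ isT) xK'.
by rewrite xK' in xK.
Qed.

Lemma path_eO (T : finType) (e : rel T) (K : {set T}) x p :
  path e x p -> x \notin K -> all (fun y => y \notin K) p -> path (eO e K) x p.
Proof.
elim: p x => [|a p IH] x //= /andP[exa pa] xK /andP[aK al].
by apply/andP; split; [rewrite /eO /= exa xK aK | exact: IH].
Qed.


Lemma eO_all (T : finType) (e : rel T) (K : {set T}) x p :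
  path (eO e K) x p -> all (fun y => y \notin K) p.
Proof.
elim: p x => [|a p IH] x //= /andP[/and3P[_ _ aK] pa].
by rewrite aK (IH a).
Qed.

Lemma linked_hole (T : finType) (e : rel T) (K : {set T}) :
  symmetric e -> irreflexive e -> is_clique e K ->
  (forall x v u, x \notin K -> v \in K -> u \in K -> v != u -> e v x -> e x u -> False) ->
  forall v u x y, v \in K -> u \in K -> v != u -> x \notin K -> e v x -> e y u ->
  connect (eO e K) x y ->
  exists S, [/\ is_hole e S, v \in S & u \in S].
Proof.
move=> sym irr Kcl F1 v u x y vK uK vu xK evx eyu /connectP [p pth Ey]; subst y.
apply: (bridge_hole sym irr Kcl F1 vK uK vu (s := x :: p)).
rewrite /bridge /= xK (eO_all pth) evx eyu andbT /=.
by rewrite andbT; apply: sub_path pth => a b /and3P[].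
Qed.

Lemma cycle_connect (T : finType) (e : rel T) (K : {set T}) (c : seq T) w w' :
  cycle e c -> all (fun y => y \notin K) c -> w \in c -> w' \in c ->
  connect (eO e K) w w'.
Proof.
move=> cyc al wc w'c.
case: (rot_to wc) => i r Hr.
have cyc' : cycle e (w :: r) by rewrite -Hr rot_cycle.
have al' : all (fun y => y \notin K) (w :: r) by apply/allP => y; rewrite -Hr mem_rot; move/allP: al; apply.
have w'c' : w' \in w :: r by rewrite -Hr mem_rot.
move: cyc'; rewrite /cycle rcons_path => /andP[pr _].
case/andP: al' => wK rK.
exact: (path_connect (path_eO pr wK rK) w'c').
Qed.

Lemma cycle_exit (T : finType) (e : rel T) (K : {set T}) (c : seq T) w u :
  cycle e c -> w \in c -> w \notin K -> u \in c -> u \in K ->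
  exists y u', [/\ y \notin K, e y u', u' \in c, u' \in K & connect (eO e K) w y].
Proof.
move=> cyc wc wK uc uK.
case: (rot_to wc) => i r Hr.
have cyc' : cycle e (w :: r) by rewrite -Hr rot_cycle.
have ur : u \in r.
  have : u \in w :: r by rewrite -Hr mem_rot.
  by rewrite inE => /orP[/eqP E|//]; subst; rewrite uK in wK.
have hr : has (fun y => y \in K) r by apply/hasP; exists u.
move: cyc'; rewrite /cycle rcons_path => /andP[pr _].
have memr : forall y, y \in r -> y \in c by move=> y yr; rewrite -(mem_rot i) Hr inE yr orbT.
move: memr pr; case: (split_find hr) => u' s1 s2 u'K ns1 memr pr.
exists (last w s1), u'; split => //.
- have := mem_last w s1; rewrite inE => /orP[/eqP ->//|ls1].
  by apply/negP => lK; move/hasP: ns1; apply; exists (last w s1).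
- by move: pr; rewrite cat_path rcons_path => /andP[/andP[]].
- by apply: memr; rewrite mem_cat mem_rcons inE eqxx.
- apply: (path_connect (p := s1)); last exact: mem_last.
  apply: path_eO => //.
    by move: pr; rewrite cat_path rcons_path => /andP[/andP[]].
  by apply/allP => y ys; apply/negP => yK; move/hasP: ns1; apply; exists y.
Qed.

Lemma kap_split (T : finType) (e : rel T) (K : {set T}) v w p :
  v \in K -> K_avoiding_path e K v w p -> p != [::] ->
  (w \notin K -> exists x, [/\ x \notin K, e v x & connect (eO e K) x w]) /\
  (w \in K -> exists x y, [/\ x \notin K, y \notin K, e v x, e y w & connect (eO e K) x y]).
Proof.
case: p => [//|x q] vK [pth lst U nedge intr] _.
move: pth lst intr => /= /andP[evx pq] lst intr.
have E : x :: q = rcons (belast x q) w by rewrite lastI lst.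
split => wK.
- have al : all (fun y => y \notin K) (x :: q) by rewrite E all_rcons wK intr.
  case/andP: al => xK qK.
  exists x; split => //.
  by rewrite -lst; apply: (path_connect (path_eO pq xK qK)); exact: mem_last.
- move: E intr; case: (belast x q) => [|x' r'] /=.
    case=> Ex Eq; subst; move: nedge; rewrite /= vK; rewrite /= in wK; by rewrite wK.
  case=> Ex Eq /andP[xK rK]; subst x' q.
  move: pq; rewrite rcons_path => /andP[pr ey].
  exists x, (last x r'); split => //.
  + have := mem_last x r'; rewrite inE => /orP[/eqP -> //|lr].
    by move/allP: rK; apply.
  + exact: (path_connect (path_eO pr xK rK) (mem_last x r')).
Qed.

Definition pb (P : Prop) : bool := if excluded_middle_informative P then true else false.
Lemma pbP (P : Prop) : reflect P (pb P).
Proof. by rewrite /pb; case: excluded_middle_informative => h; constructor. Qed.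

Definition reach (T : finType) (e : rel T) (K : {set T}) v (H : {set T}) : Prop :=
  exists x w, [/\ x \notin K, e v x, w \in H & connect (eO e K) x w].

Definition partner (T : finType) (holes : {set {set T}}) (K : {set T}) v :=
  [exists H in holes, (v \in H) && (1 < #|H :&: K|)].

Definition ch (T : finType) (e : rel T) (holes : {set {set T}}) (K : {set T}) (H : {set T}) v :=
  if v \in K then
    (if v \in H then (if 1 < #|H :&: K| then 1 else 2)
     else (if (#|H :&: K| == 0) && pb (reach e K v H) && ~~ partner holes K v then 2 else 0))
  else 0.

Lemma sum_bound (T : finType) (f : T -> nat) (A : {set T}) m :
  (forall v, f v <= (if v \in A then m else 0)) -> \sum_v f v <= #|A| * m.
Proof.
move=> h; apply: (@leq_trans (\sum_v (if v \in A then m else 0))); first by apply: leq_sum => v _; exact: h.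
by rewrite -big_mkcond /= sum_nat_const.
Qed.

Lemma eO_sym (T : finType) (e : rel T) (K : {set T}) : symmetric e -> symmetric (eO e K).
Proof.
by move=> sym a b; rewrite /eO /= sym; case: (a \in K); case: (b \in K); rewrite ?andbF ?andbT.
Qed.

Theorem lemma3 (T : finType) (e : rel T) (holes : {set {set T}}) (K : {set T})
  (Hsimple : simple_graph e)
  (Hconn : connected_graph e)
  (Hholes : forall S : {set T}, S \in holes <-> is_hole e S)
  (Hdisj : forall H1 H2 : {set T}, H1 \in holes -> H2 \in holes -> H1 != H2 ->
             forall x y : T, ~~ (hole_edge e H1 x y && hole_edge e H2 x y))
  (HK : maximal_clique e K) (HK3 : non_edge_clique K)
  (HKuniq : forall K' : {set T}, maximal_clique e K' -> non_edge_clique K' -> K' = K)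
  (Hsize : #|K| = #|holes| + 1) :
  exists2 v : T, v \in K &
    (forall (H : {set T}) (w : T) (p : seq T),
        H \in holes -> w \in H -> ~ K_avoiding_path e K v w p)
    \/
    (exists2 H : {set T}, H \in holes &
       (exists u : T, (u \in K) && hole_edge e H v u) /\
       (forall H' : {set T}, H' \in holes -> v \in H' -> H' = H)).
Proof.
apply: NNPP => Hn.
case: Hsimple => sym irr.
have Kcl : is_clique e K by case: HK.
have F1 := tri_K sym irr HK HKuniq.
have link : forall v u x y, v \in K -> u \in K -> v != u -> x \notin K -> e v x -> e y u ->
    connect (eO e K) x y -> partner holes K v.
  move=> v u x y vK uK vu xK evx eyu cxy.
  have [S [hS vS uS]] := linked_hole sym irr Kcl F1 vK uK vu xK evx eyu cxy.
  apply/existsP; exists S; rewrite (proj2 (Hholes S) hS) vS /=.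
  by apply/card_gt1P; exists v, u; rewrite !inE vS uS vK uK.
have notA : forall v, v \in K -> exists H w p, [/\ H \in holes, w \in H & K_avoiding_path e K v w p].
  move=> v vK; apply: NNPP => h; apply: Hn; exists v => //; left => H w p Hh wH kp.
  by apply: h; exists H, w, p.
have notB : forall v, v \in K -> forall H, H \in holes -> (exists u, (u \in K) && hole_edge e H v u) ->
    exists H', [/\ H' \in holes, v \in H' & H' != H].
  move=> v vK H Hh ex; apply: NNPP => h; apply: Hn; exists v => //; right; exists H => //.
  split => // H' H'h vH'; apply: NNPP => nE; apply: h; exists H'; split => //.
  by apply/eqP.
have ch_in : forall (H : {set T}) v, v \in K -> v \in H -> 1 <= ch e holes K H v.
  by move=> H v vK vH; rewrite /ch vK vH; case: ifP.
have vbound : forall v, v \in K -> 2 <= \sum_(H in holes) ch e holes K H v.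
  move=> v vK.
  case: (boolP (partner holes K v)) => [/existsP [H0 /andP[H0h /andP[vH0 k2]]] | np].
  - have [u [uK uH0 uv]] : exists u, [/\ u \in K, u \in H0 & u != v].
      case/card_gt1P: k2 => a [b [aS bS ab]].
      move: aS bS; rewrite !inE => /andP[aH aK] /andP[bH bK].
      case: (eqVneq a v) => [Ea|av]; last by exists a.
      by exists b; split => //; rewrite -Ea eq_sym.
    have [H' [H'h vH' H'n]] : exists H', [/\ H' \in holes, v \in H' & H' != H0].
      apply: (notB v vK H0 H0h); exists u; rewrite uK /hole_edge vH0 uH0 /= !andbT.
      by apply: Kcl => //; rewrite eq_sym.
    rewrite (bigD1 H0) //= (bigD1 H') /=; last by rewrite H'h H'n.
    have := ch_in H0 v vK vH0; have := ch_in H' v vK vH'; nlia.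
  - have [H [w [p [Hh wH kp]]]] := notA v vK.
    rewrite (bigD1 H) //=; apply: leq_trans (leq_addr _ _).
    case: (boolP (v \in H)) => vH.
      rewrite /ch vK vH; case: ifP => // k2; exfalso.
      by move/negP: np; apply; apply/existsP; exists H; rewrite Hh vH k2.
    have pn : p != [::].
      by apply: contraNneq vH => Ep; case: kp => _ lst _ _ _; move: lst; rewrite Ep /= => ->.
    have [k1 k2] := kap_split vK kp pn.
    have hH := proj1 (Hholes H) Hh.
    case: (boolP (#|H :&: K| == 0)) => kc0.
      rewrite /ch vK (negPf vH) kc0 np andbT /=.
      have wK : w \notin K.
        by apply: contraTN kc0 => wK; rewrite cards_eq0; apply/set0Pn; exists w; rewrite inE wH wK.
      have [x [xK evx cxw]] := k1 wK.
      by have -> : pb (reach e K v H) by apply/pbP; exists x, w.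
    exfalso; move/negP: np; apply.
    have [u] : exists u, u \in H :&: K by apply/set0Pn; rewrite -cards_eq0.
    rewrite inE => /andP[uH uK].
    case: (boolP (w \in K)) => wK.
      have [x [y [xK yK evx eyw cxy]]] := k2 wK.
      have vw : v != w.
        apply: contraNneq vH => ->; exact: wH.
      exact: (link v w x y vK wK vw xK evx eyw cxy).
    have [x [xK evx cxw]] := k1 wK.
    case: hH => c [Uc szc cyc chord EH].
    have wc : w \in c by move: wH; rewrite EH inE.
    have uc : u \in c by move: uH; rewrite EH inE.
    have [y [u' [yK eyu' u'c u'K cwy]]] := cycle_exit cyc wc wK uc uK.
    have vu' : v != u'.
      by apply: contraNneq vH => ->; rewrite EH inE.
    exact: (link v u' x y vK u'K vu' xK evx eyu' (connect_trans cxw cwy)).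
have hbound : forall H : {set T}, H \in holes -> \sum_v ch e holes K H v <= 2.
  move=> H Hh.
  have hH := proj1 (Hholes H) Hh.
  have k2 := hole_K2 sym Kcl hH.
  case: (ltnP 1 #|H :&: K|) => kc.
    apply: leq_trans (sum_bound (A := H :&: K) (m := 1) _) _; last by rewrite muln1.
    move=> v; rewrite /ch inE; case: (v \in K); rewrite ?andbT ?andbF //.
    have kn0 : (#|H :&: K| == 0) = false by move: kc; case: (#|H :&: K|).
    by case: (v \in H) => /=; [rewrite ifT | rewrite kn0].
  case: (boolP (#|H :&: K| == 0)) => kc0; last first.
    apply: leq_trans (sum_bound (A := H :&: K) (m := 2) _) _; last first.
      by move: kc0 kc; case: (#|H :&: K|) => [|[]].
    move=> v; rewrite /ch inE; case: (v \in K); rewrite ?andbT ?andbF //.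
    by case: (v \in H) => /=; [case: ifP | rewrite (negPf kc0)].
  apply: leq_trans (sum_bound (A := [set v | ch e holes K H v != 0]) (m := 2) _) _.
    move=> v; rewrite inE; case: eqP => [-> //|_].
    by rewrite /ch; case: (v \in K) => //; case: (v \in H); case: ifP => //; case: ifP.
  have le1 : #|[set v | ch e holes K H v != 0]| <= 1.
    rewrite leqNgt; apply/negP => /card_gt1P [a [b [aA bA ab]]].
    have good : forall v, v \in [set v | ch e holes K H v != 0] ->
        [/\ v \in K, reach e K v H & ~~ partner holes K v].
      move=> v; rewrite inE /ch.
      case: (boolP (v \in K)) => vK //.
      case: (boolP (v \in H)) => vH.
        move: kc0; rewrite cards_eq0 => /eqP E.
        have : v \in H :&: K by rewrite inE vH vK.
        by rewrite E inE.
      rewrite kc0 /=; case: pbP => //= r; case: (partner holes K v) => //.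
    have [aK [xa [wa [xaK eaxa waH cxa]]] npa] := good a aA.
    have [bK [xb [wb [xbK ebxb wbH cxb]]] npb] := good b bA.
    case: hH => c [Uc szc cyc chord EH].
    have allc : all (fun y => y \notin K) c.
      apply/allP => y yc; apply/negP => yK.
      move: kc0; rewrite cards_eq0 => /eqP E.
      have : y \in H :&: K by rewrite inE EH inE yc yK.
      by rewrite E inE.
    have waw : connect (eO e K) wa wb.
      by apply: (cycle_connect cyc allc); [move: waH | move: wbH]; rewrite EH inE.
    have symc := sym_connect_sym (eO_sym K sym).
    have c2 : connect (eO e K) xa xb.
      apply: connect_trans (connect_trans cxa waw) _; by rewrite symc.
    move/negP: npa; apply.
    by apply: (link a b xa xb aK bK ab xaK eaxa _ c2); rewrite sym.
  by have := le1; nlia.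
have lo : 2 * #|K| <= \sum_v \sum_(H in holes) ch e holes K H v.
  apply: leq_trans (_ : \sum_(v in K) \sum_(H in holes) ch e holes K H v <= _).
    rewrite mulnC -sum_nat_const; apply: leq_sum => v vK; exact: vbound.
  by rewrite [X in _ <= X](bigID (fun v => v \in K)) /= leq_addr.
have hi : \sum_v \sum_(H in holes) ch e holes K H v <= 2 * #|holes|.
  rewrite exchange_big /= mulnC -sum_nat_const; apply: leq_sum => H Hh; exact: hbound.
have := leq_trans lo hi; rewrite Hsize; nlia.
Qed.
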